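(* Let $X$ be a finite set and $(\mathcal{T}_X,\leq)$ the ordered full transformation semigroup with the natural partial order. For $f,g\in\mathcal{T}_X$ let $B(f)=(f\cup f\mathcal{T}_Xf]$ and $B(g)=(g\cup g\mathcal{T}_Xg]$ be the principal bi-ideals they generate. Then $f\,\mathscr{L}_{\mathcal{T}_X}\,g$ if and only if $B(f)\,\mathscr{L}_{\mathcal{B}(\mathcal{T}_X)}\,B(g)$, where for bi-ideals $B_1,B_2$ of $(\mathcal{T}_X,\leq)$ we define $B_1\,\mathscr{L}_{\mathcal{B}(\mathcal{T}_X)}\,B_2$ to mean: for each $b_1\in B_1$ there exists $b_2\in B_2$ with $b_1\,\mathscr{L}_{\mathcal{T}_X}\,b_2$, and for each $b_2'\in B_2$ there exists $b_1'\in B_1$ with $b_1'\,\mathscr{L}_{\mathcal{T}_X}\,b_2'$.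
   Context: $\mathcal{T}_X$ is the semigroup of all maps $X\to X$, maps written on the right and composed left to right. Natural partial order: $f\leq g$ iff $f\mathcal{T}_X^1\subseteq g\mathcal{T}_X^1$ and $f=\alpha f=\alpha g$ for some $\alpha\in\mathcal{T}_X$; $(\mathcal{T}_X,\leq)$ is then a regular ordered semigroup. For $A\subseteq\mathcal{T}_X$, $(A]=\{h: h\leq a\text{ for some }a\in A\}$. A bi-ideal is a nonempty $A$ with $A\mathcal{T}_XA\subseteq A$ and $(A]=A$. $\mathscr{L}_{\mathcal{T}_X}$ is the Green's $\mathscr{L}$-relation of the ordered semigroup $(\mathcal{T}_X,\leq)$: $f\,\mathscr{L}_{\mathcal{T}_X}\,g$ iff $(f\cup\mathcal{T}_Xf]=(g\cup\mathcal{T}_Xg]$ (equivalently, $\operatorname{Im}f=\operatorname{Im}g$). *)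

(* Defs.v *)
From mathcomp Require Import all_boot.
Set Implicit Arguments. Unset Strict Implicit. Unset Printing Implicit Defensive.

Definition trans (T : finType) := T -> T.

(* Maps written on the right, composed left to right: x (f g) = (x f) g. *)
Definition tmul (T : finType) (f g : trans T) : trans T := fun x => g (f x).

Definition tset (T : finType) := trans T -> Prop.

Definition rideal1 (T : finType) (f : trans T) : tset T :=
  fun h => h = f \/ exists k, h = tmul f k.

Definition tle (T : finType) (f g : trans T) : Prop :=
  (forall h, rideal1 f h -> rideal1 g h) /\
  exists a : trans T, f = tmul a f /\ f = tmul a g.

Definition down (T : finType) (A : tset T) : tset T :=
  fun h => exists a, A a /\ tle h a.

Definition lideal_gen (T : finType) (f : trans T) : tset T :=
  down (fun h => h = f \/ exists k, h = tmul k f).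

Definition Lrel (T : finType) (f g : trans T) : Prop :=
  forall h, lideal_gen f h <-> lideal_gen g h.

Definition Bgen (T : finType) (f : trans T) : tset T :=
  down (fun h => h = f \/ exists k, h = tmul (tmul f k) f).

Definition LBrel (T : finType) (B1 B2 : tset T) : Prop :=
  (forall b1, B1 b1 -> exists b2, B2 b2 /\ Lrel b1 b2) /\
  (forall b2, B2 b2 -> exists b1, B1 b1 /\ Lrel b1 b2).

(* Main.v *)
From Stdlib Require Import FunctionalExtensionality.
Require Import Defs.
From mathcomp Require Import all_boot.

Definition img (T : finType) (f : trans T) (y : T) := exists x, f x = y.
Arguments img {T}.
Set Implicit Arguments.

Lemma tle_refl (T : finType) (h : trans T) : tle h h.
Proof. split; first by []. by exists id. Qed.

Lemma le_img (T : finType) (h a : trans T) :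
  tle h a -> forall y, img h y -> img a y.
Proof.
move=> [_ [c [_ E]]] y [x <-]. exists (c x).
by rewrite E.
Qed.

Lemma lideal_char (T : finType) (f h : trans T) :
  lideal_gen f h <-> (forall y, img h y -> img f y).
Proof.
split.
  move=> [a [[->|[k ->]] Hle]] y Hy; first exact: le_img Hle y Hy.
  have [x <-] := le_img Hle Hy. by exists (k x).
move=> H. exists h; split; last exact: tle_refl.
right. exists (fun x => odflt x [pick z | f z == h x]).
apply: functional_extensionality => x; rewrite /tmul.
case: pickP => [z /eqP -> //|Hn].
have [z Hz] := H (h x) (ex_intro _ x erefl).
by move: (Hn z); rewrite Hz eqxx.
Qed.

Lemma Lrel_char (T : finType) (f g : trans T) :
  Lrel f g <-> (forall y, img f y <-> img g y).
Proof.
split.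
  move=> H y; split.
    have : lideal_gen g f by apply/H/lideal_char.
    by move/lideal_char; apply.
  have : lideal_gen f g by apply/H/lideal_char.
  by move/lideal_char; apply.
move=> H h; split=> /lideal_char H1; apply/lideal_char => y /H1; apply H.
Qed.

Lemma Bgen_img (T : finType) (g b : trans T) :
  Bgen g b -> forall y, img b y -> img g y.
Proof.
move=> [a [[->|[k ->]] Hle]] y Hy; first exact: le_img Hle y Hy.
have [x <-] := le_img Hle Hy. by exists (k (g x)).
Qed.

Lemma key (T : finType) (g h : trans T) :
  (forall y, img h y -> img g y) ->
  exists k, forall y, img (tmul (tmul g k) g) y <-> img h y.
Proof.
move=> Hs.
case: (pickP (fun _ : T => true)) => [x0 _|Hn]; last first.
  by exists id => y; move: (Hn y).
pose r y := if [exists x, h x == y] then y else h x0.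
pose k y := odflt y [pick z | g z == r y].
have gk : forall y, g (k y) = r y.
  move=> y; rewrite /k; case: pickP => [z /eqP -> //|Hn].
  have : img h (r y).
    rewrite /r; case: existsP => [[x /eqP Hx]|_]; [by exists x | by exists x0].
  move=> /Hs [z Hz]. by move: (Hn z); rewrite Hz eqxx.
exists k => y; split.
  move=> [x <-]; rewrite /tmul gk /r.
  case: existsP => [[x' /eqP Hx]|_]; [by exists x' | by exists x0].
move=> [x Hx]. have [w Hw] := Hs y (ex_intro _ x Hx).
exists w; rewrite /tmul Hw gk /r.
case: existsP => // Hne; exfalso; apply: Hne; exists x; by rewrite Hx.
Qed.

Lemma inB (T : finType) (g k : trans T) : Bgen g (tmul (tmul g k) g).
Proof. exists (tmul (tmul g k) g); split; [right; by exists k | exact: tle_refl]. Qed.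

Lemma inB0 (T : finType) (g : trans T) : Bgen g g.
Proof. exists g; split; [by left | exact: tle_refl]. Qed.

Theorem mainTheorem10 (T : finType) (f g : trans T) :
  Lrel f g <-> LBrel (Bgen f) (Bgen g).
Proof.
apply: iff_trans (Lrel_char f g) _; split.
  move=> H; split.
    move=> b1 Hb1.
    have [k Hk] : exists k, forall y, img (tmul (tmul g k) g) y <-> img b1 y.
      by apply: key => y /(Bgen_img Hb1) /H.
    exists (tmul (tmul g k) g); split; first exact: inB.
    by apply/Lrel_char => y; apply: iff_sym; apply: Hk.
  move=> b2 Hb2.
  have [k Hk] : exists k, forall y, img (tmul (tmul f k) f) y <-> img b2 y.
    by apply: key => y /(Bgen_img Hb2) /H.
  exists (tmul (tmul f k) f); split; first exact: inB.
  by apply/Lrel_char => y; apply: Hk.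
move=> [H1 H2] y; split.
  have [b2 [Hb2 /Lrel_char L]] := H1 f (inB0 f).
  by move=> /L /(Bgen_img Hb2).
have [b1 [Hb1 /Lrel_char L]] := H2 g (inB0 g).
by move=> /L /(Bgen_img Hb1).
Qed.
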